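(* Let $N_t$ be a simple point process on $[0,\infty)$ with $N_0=0$, arrival times $0<\tau_1<\tau_2<\cdots$ and inter-arrival times $T_i=\tau_i-\tau_{i-1}$ ($\tau_0=0$). Let $p>0$ and let i.i.d. claims $C_i$ be given, and suppose Assumption A1 holds. Then for any fixed $\epsilon,\epsilon'>0$ there exists a constant $M>0$ such that $$\mathbb{P}\left(\bigcap_{n=1}^{\infty}\left\{p\sum_{i=1}^{n}T_i\le n\left(\frac{p}{\mu}+\epsilon\right)+M\right\}\right)>1-\epsilon'.$$
   Context: Assumption A1: (i) $(N_t/t\in\cdot)$ satisfies a large deviation principle (as $t\to\infty$) with a rate function $I$ such that $I(x)=0$ if and only if $x=\mu$ (for some $\mu>0$); (ii) $I$ is increasing on $[\mu,\infty)$ and decreasing on $[0,\mu]$; (iii) the net profit condition $\rho:=\mu\mathbb{E}[C_1]/p<1$ holds; (iv) there exists $\theta>0$ such that $\mathbb{E}[e^{\theta\sum_{i=1}^n T_i}]<\infty$ for every $n\in\mathbb{N}$. Here $C_i$ are i.i.d. nonnegative claim sizes with finite mean, independent of $N$, and $p>0$ is the premium rate. *)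

(* Defs.v *)
From HB Require Import structures.
From mathcomp Require Import all_boot all_order all_algebra.
From mathcomp Require Import all_classical all_reals all_analysis.
Set Implicit Arguments. Unset Strict Implicit. Unset Printing Implicit Defensive.
Import Order.TTheory GRing.Theory Num.Theory.
Import numFieldNormedType.Exports.
Local Open Scope classical_set_scope.
Local Open Scope ring_scope.

Section Defs.
Context {d : measure_display} {T : measurableType d} {R : realType}.
Variable P : probability T R.

(* arrival time tau_n = T_1 + ... + T_n  (tau_0 = 0); index 0 of Tm unused *)
Definition arrival (Tm : nat -> T -> R) (n : nat) (w : T) : R :=
  \sum_(1 <= i < n.+1) Tm i w.

(* Simple point process N on [0,oo) with N_0 = 0, inter-arrival times Tm i
   (i >= 1), arrival times 0 < tau_1 < tau_2 < ...:
   N_t(w) = #{n >= 1 | tau_n(w) <= t}, i.e. N_t >= n  <->  tau_n <= t. *)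
Definition simple_point_process (N : R -> T -> nat) (Tm : nat -> T -> R) : Prop :=
  [/\ (forall i, measurable_fun setT (Tm i)),
      (forall i w, 0 < Tm i.+1 w),
      (forall w, N 0 w = 0%N) &
      (forall t w n, (n.+1 <= N t w)%N <-> arrival Tm n.+1 w <= t)].

Definition mutually_independent (X : nat -> T -> R) : Prop :=
  forall (s : seq nat) (B : nat -> set R), uniq s ->
    (forall i, measurable (B i)) ->
    P (\big[setI/setT]_(i <- s) (X i @^-1` B i)) =
    (\prod_(i <- s) P (X i @^-1` B i))%E.

Definition identically_distributed (X : nat -> T -> R) : Prop :=
  forall i (B : set R), measurable B ->
    P (X i.+1 @^-1` B) = P (X 1%N @^-1` B).

Definition independent_of_process (X : nat -> T -> R) (N : R -> T -> nat) : Prop :=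
  forall (s : seq nat) (B : nat -> set R) (u : seq R) (A : R -> set nat),
    (forall i, measurable (B i)) ->
    let EX := \big[setI/setT]_(i <- s) (X i @^-1` B i) in
    let EN := \big[setI/setT]_(t <- u) (N t @^-1` A t) in
    P (EX `&` EN) = (P EX * P EN)%E.

Definition rate_function (I : R -> \bar R) : Prop :=
  (forall x, (0 <= I x)%E) /\ (forall a : R, closed [set x | (I x <= a%:E)%E]).

Definition inf_over (I : R -> \bar R) (A : set R) : \bar R := ereal_inf (I @` A).

(* Large deviation principle for (N_t / t) as t -> +oo with rate function I:
     limsup_t (1/t) log P(N_t/t in F) <= - inf_F I   (F closed)
     liminf_t (1/t) log P(N_t/t in G) >= - inf_G I   (G open)
   written out: limsup f <= L iff for all c > L, eventually f < c, etc. *)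
Definition LDP (N : R -> T -> nat) (I : R -> \bar R) : Prop :=
  [/\ rate_function I,
      (forall F : set R, closed F -> forall g : R, (g%:E < inf_over I F)%E ->
         \forall t \near +oo,
           (P [set w | F ((N t w)%:R / t)%R] < (expR (- (g * t))%R)%:E)%E) &
      (forall G : set R, open G -> forall g : R, (inf_over I G < g%:E)%E ->
         \forall t \near +oo,
           ((expR (- (g * t))%R)%:E < P [set w | G ((N t w)%:R / t)%R])%E)].

Definition assumption_A1 (N : R -> T -> nat) (Tm : nat -> T -> R)
  (C : nat -> T -> R) (p mu : R) : Prop :=
  [/\ 0 < mu,
      exists I : R -> \bar R,
        [/\ LDP N I,
            (forall x, I x = 0%E <-> x = mu),
            (forall x y, mu <= x -> x <= y -> (I x <= I y)%E) &
            (forall x y, 0 <= x -> x <= y -> y <= mu -> (I y <= I x)%E)],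
      (* (iii) net profit condition rho = mu E[C_1] / p < 1 *)
      (mu%:E * \int[P]_w (C 1%N w)%:E < p%:E)%E &
      exists theta : R, 0 < theta /\
        forall n : nat, (\int[P]_w (expR (theta * arrival Tm n w))%:E < +oo)%E].

End Defs.

(* Main.v *)
Require Import Defs.
From HB Require Import structures.
From mathcomp Require Import all_boot all_order all_algebra.
From mathcomp Require Import all_classical all_reals all_analysis.
From mathcomp Require Import ring lra.
Import Order.TTheory GRing.Theory Num.Theory.
Import numFieldNormedType.Exports.
Local Open Scope classical_set_scope.
Local Open Scope ring_scope.
Lemma meas_le d (T : measurableType d) (R : realType) (f : T -> R) (t : R) :
  measurable_fun setT f -> measurable [set w | f w <= t].
Proof.
move=> mf; have := mf measurableT _ (measurable_itv `]-oo, t]).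
rewrite setTI; congr measurable; apply/seteqP; split => w /=; by rewrite in_itv /=.
Qed.

Lemma meas_gt d (T : measurableType d) (R : realType) (f : T -> R) (t : R) :
  measurable_fun setT f -> measurable [set w | t < f w].
Proof.
move=> mf; have := mf measurableT _ (measurable_itv `]t, +oo[).
rewrite setTI; congr measurable; apply/seteqP; split => w /=; by rewrite in_itv /= andbT.
Qed.

Lemma geom_bound (R : realType) (r : R) k : 0 <= r -> r < 1 ->
  \sum_(i < k) r ^+ i <= (1 - r)^-1.
Proof.
move=> r0 r1.
have E : (1 - r) * \sum_(i < k) r ^+ i = 1 - r ^+ k.
  elim: k => [|k IH]; first by rewrite big_ord0 mulr0 expr0 subrr.
  by rewrite big_ord_recr /= mulrDr IH exprS; ring.
have r1' : 0 < 1 - r by rewrite subr_gt0.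
rewrite -(ler_pM2l r1') E mulfV ?gt_eqF //.
by rewrite lerBlDr lerDl exprn_ge0.
Qed.

Lemma meas_const d (T : measurableType d) (Q : Prop) : measurable [set _ : T | Q].
Proof.
have [h|h] := pselect Q.
  by rewrite (_ : [set _ | Q] = setT) //; apply/seteqP; split.
by rewrite (_ : [set _ | Q] = set0) //; apply/seteqP; split.
Qed.

Theorem lemma1 (d : measure_display) (T : measurableType d) (R : realType)
  (P : probability T R) (N : R -> T -> nat) (Tm : nat -> T -> R)
  (C : nat -> T -> R) (p mu : R) :
  simple_point_process N Tm ->
  0 < p ->
  (forall i, measurable_fun setT (C i)) ->
  mutually_independent P C ->
  identically_distributed P C ->
  (forall i w, 0 <= C i w) ->
  P.-integrable setT (fun w => (C 1%N w)%:E) ->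
  independent_of_process P C N ->
  assumption_A1 P N Tm C p mu ->
  forall eps eps' : R, 0 < eps -> 0 < eps' ->
  exists M : R, 0 < M /\
    ((1 - eps')%:E <
      P (\bigcap_n [set w | (p * arrival Tm n.+1 w
                            <= n.+1%:R * (p / mu + eps) + M)%R]))%E.
Proof.
move=> [Tmeas Tpos N0 NE] p0 _ _ _ _ _ _ [mu0 [I [[[Ige0 _] Hup _] I0 _ Idec]] _ _].
move=> eps eps' e0 e'0.
have arrm n : measurable_fun setT (arrival Tm n).
  by apply: measurable_sum => i; exact: Tmeas.
pose a := mu^-1 + eps / p.
have a0 : 0 < a by rewrite addr_gt0 // ?invr_gt0 // divr_gt0.
pose x := a^-1.
have x0 : 0 < x by rewrite invr_gt0.
have xmu : x < mu.
  rewrite /x -[X in _ < X]invrK ltf_pV2 ?posrE ?invr_gt0 //.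
  by rewrite /a ltrDl divr_gt0.
pose F := `[0, x]%classic.
have Fc : closed F by exact: interval_closed.
have Ixpos : (0 < I x)%E.
  rewrite lt_neqAle Ige0 andbT; apply/negP => /eqP/esym/I0 xE.
  by move: xmu; rewrite xE ltxx.
have [g [g0 gI]] : exists g : R, 0 < g /\ (g%:E < I x)%E.
  move: Ixpos; case: (I x) => [r| |] //= r0.
    have r0' : 0 < r by rewrite -lte_fin.
    exists (r / 2); split; first by rewrite divr_gt0.
    by rewrite lte_fin; lra.
  by exists 1; split => //; exact: ltry.
have gF : (g%:E < inf_over I F)%E.
  apply: (lt_le_trans gI); apply: le_ereal_inf_tmp => _ [z Fz <-].
  move: Fz; rewrite /F /= in_itv /= => /andP[z0 zx].
  by apply: Idec => //; exact: ltW.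
have [t0 [_ Ht0]] := Hup F Fc g gF.
have Emeas (t y : R) : measurable [set w | (N t w)%:R <= y].
  rewrite (_ : [set w | _] = \bigcap_k ([set _ : T | k%:R <= y] `|`
                                       ~` [set w | (k <= N t w)%N])).
    apply: bigcapT_measurable => k; apply: measurableU; first exact: meas_const.
    apply: measurableC; case: k => [|j].
      by rewrite (_ : [set w | _] = setT) //; apply/seteqP; split.
    rewrite (_ : [set w | _] = [set w | arrival Tm j.+1 w <= t]).
      exact: meas_le.
    by apply/seteqP; split => w /= /NE.
  apply/seteqP; split => w /=.
    move=> Hw k _; have [kN|kN] := boolP (k <= N t w)%N; [left|right] => //.
      by apply: le_trans Hw; rewrite ler_nat.
    by apply/negP.
  by move=> /(_ (N t w) Logic.I) [//|]; rewrite /= leqnn.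
pose r := expR (- (g * a)).
have r0 : 0 < r by exact: expR_gt0.
have r1 : r < 1 by rewrite /r expR_lt1 oppr_lt0 mulr_gt0.
pose z := ln (eps' * (1 - r)).
pose m := `|t0| + 1 + `|z| / g.
have zg : 0 <= `|z| / g by rewrite divr_ge0 // ltW.
have m0 : 0 < m by rewrite /m; have := normr_ge0 t0; lra.
have mt0 : t0 < m.
  by rewrite /m; have := ler_norm t0; lra.
have em : expR (- (g * m)) < eps' * (1 - r).
  have pos : 0 < eps' * (1 - r) by rewrite mulr_gt0 // subr_gt0.
  rewrite -[X in _ < X](lnK pos) ltr_expR -/z.
  have -> : g * m = g * `|t0| + g + `|z| by rewrite /m; field; rewrite gt_eqF.
  have := ler_norm (- z); rewrite normrN.
  have : 0 <= g * `|t0| by rewrite mulr_ge0 // ltW.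
  lra.
pose tn (n : nat) := n.+1%:R * a + m.
have tn0 n : 0 < tn n by rewrite /tn ltr_wpDl // mulr_ge0 // ltW.
have tnt0 n : t0 < tn n by rewrite /tn (lt_le_trans mt0) // lerDr mulr_ge0 // ltW.
pose B n := [set w | tn n < arrival Tm n.+1 w].
have Bm n : measurable (B n) by exact: meas_gt.
have PB n : (P (B n) <= (expR (- (g * m)) * r ^+ n)%:E)%E.
  have Esub : B n `<=` [set w | F ((N (tn n) w)%:R / tn n)].
    move=> w /= Bw; rewrite /F /= in_itv /=; apply/andP; split.
      by rewrite divr_ge0 // ltW.
    have Nn : (N (tn n) w <= n)%N.
      rewrite leqNgt; apply/negP => /NE H; move: Bw; by rewrite /B /= ltNge H.
    rewrite ler_pdivrMr // /x.
    rewrite (le_trans (_ : _ <= n.+1%:R)) //.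
      by rewrite ler_nat; apply: leqW.
    have -> : a^-1 * tn n = n.+1%:R + m / a by rewrite /tn; field; rewrite gt_eqF.
    by rewrite lerDl divr_ge0 // ltW.
  have Emeq : [set w | F ((N (tn n) w)%:R / tn n)] =
      [set w | (N (tn n) w)%:R <= x * tn n].
    apply/seteqP; split => w /=; rewrite /F /= in_itv /= ler_pdivrMr //.
      by case/andP.
    by move=> ->; rewrite andbT divr_ge0 // ltW.
  apply: (le_trans (le_measure _ _ _ Esub)).
  - by rewrite inE.
  - by rewrite inE Emeq.
  apply: (le_trans (ltW (Ht0 _ (tnt0 n)))); rewrite lee_fin.
  have -> : - (g * tn n) = - (g * m) + n.+1%:R * (- (g * a)) by rewrite /tn; ring.
  rewrite expRD expRM_natl -/r ler_pM2l ?expR_gt0 // exprS.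
  by rewrite ler_piMl // ?exprn_ge0 // ltW.
have Usum : (P (\bigcup_n B n) <= (expR (- (g * m)) * (1 - r)^-1)%:E)%E.
  apply: (le_trans (measure_sigma_subadditive _ Bm (bigcupT_measurable _ Bm) (@subset_refl _ _))).
  have H0 : forall n, (0 <= n)%N -> true -> (0 <= P (B n))%E by [].
  move: H0 => /ereal_nondecreasing_series/ereal_nondecreasing_cvgn/cvg_lim -> //.
  apply: ge_ereal_sup => _ [k _ <-] /=.
  apply: le_trans; first by apply: lee_sum => i _; exact: PB i.
  rewrite sumEFin lee_fin -mulr_sumr ler_pM2l ?expR_gt0 // big_mkord.
  exact: geom_bound (ltW r0) r1.
have Ubound : (P (\bigcup_n B n) < eps'%:E)%E.
  apply: (le_lt_trans Usum); rewrite lte_fin.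
  rewrite ltr_pdivrMr ?invr_gt0 ?subr_gt0 // invrK //.
exists (p * m); split; first by rewrite mulr_gt0.
have Geq : \bigcap_n [set w | (p * arrival Tm n.+1 w
                            <= n.+1%:R * (p / mu + eps) + p * m)%R] =
           ~` \bigcup_n B n.
  rewrite setC_bigcup; apply: eq_bigcapr => n _; apply/seteqP.
  have -> : n.+1%:R * (p / mu + eps) + p * m = p * tn n.
    by rewrite /tn /a; field; rewrite !gt_eqF.
  by split => w /=; rewrite ler_pM2l // leNgt => /negP.
rewrite Geq probability_setC; last exact: bigcupT_measurable.
move: Ubound.
case: (P (\bigcup_n B n)) => [s| |] //=.
  have -> : (1 + (- s)%:E)%E = (1 - s)%:E by [].
  by rewrite !lte_fin => ?; lra.
by move=> _; rewrite addey // ltry.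
Qed.
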